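(* Let $\mathbf{k}$ be a field, let $d \geq 1$, let $A = \mathbf{k}^{d}$ (the product of $d$ copies of $\mathbf{k}$, with componentwise operations and unit $1_A = (1,\dots,1)$), let $M$ be a finite-dimensional $\mathbf{k}$-vector space, and let $\phi : A \to \mathrm{End}_{\mathbf{k}}(M)$ be a $\mathbf{k}$-linear map. Let $n > 2$ be a natural number and assume that $\mathbf{k}$ contains $n$ distinct $n$-th roots of unity (equivalently, $\mathbf{k}$ contains a primitive $n$-th root of unity). If $\phi(1_A) = \mathrm{id}_M$ and for every $a \in A$ with $a^n = 1_A$ we have $\phi(a)^n = \mathrm{id}_M$, then $\phi$ is a (unital) $\mathbf{k}$-algebra homomorphism. *)

(* Defs.v *)
From mathcomp Require Import all_boot all_algebra.
Set Implicit Arguments.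
Unset Strict Implicit.
Unset Printing Implicit Defensive.
Import GRing.Theory.
Local Open Scope ring_scope.

(* A = k^d is modelled as {ffun 'I_d -> k} with its pointwise ring structure
   (unit = [ffun => 1]); M is modelled as k^m (row vectors) and End_k(M) as
   'M[k]_m acting on the right. *)

Definition klinear (k : fieldType) (d m : nat)
  (phi : {ffun 'I_d -> k} -> 'M[k]_m) : Prop :=
  (forall a b : {ffun 'I_d -> k}, phi (a + b) = phi a + phi b) /\
  (forall (c : k) (a : {ffun 'I_d -> k}), phi [ffun i => c * a i] = c *: phi a).

(* Main.v *)
Require Import Defs.
From mathcomp Require Import all_boot all_algebra.
From mathcomp Require Import zify.
Import GRing.Theory.
Local Open Scope ring_scope.

Section Core.
Variables (k : fieldType) (A : algType k) (n : nat) (z : k).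
Hypothesis prim : n.-primitive_root z.

Lemma dvd_aux l i : (0 < l < n)%N -> (i <= n)%N -> (n %| n - l + i)%N = (i == l).
Proof.
move=> H1 H2. case: (eqVneq i l) => [->|ne]. rewrite subnK ?dvdnn //; lia.
apply/negbTE/negP => /dvdnP [q Hq]. case: q Hq => [|[|q]] Hq; nia.
Qed.

Lemma geom e : \sum_(j < n) (z ^+ e) ^+ j = if (n %| e)%N then n%:R else 0.
Proof.
case: ifP => H.
  have -> : z ^+ e = 1 by apply/eqP; rewrite -(prim_order_dvd prim).
  under eq_bigr do rewrite expr1n.
  by rewrite sumr_const card_ord.
have ne : z ^+ e - 1 != 0 by rewrite subr_eq0 -(prim_order_dvd prim) H.
have := subrX1 (z ^+ e) n.
rewrite exprAC (prim_expr_order prim) expr1n subrr => /esym/eqP.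
by rewrite mulf_eq0 (negbTE ne) /= => /eqP.
Qed.

Lemma extract {X Y K : A} (cXY : GRing.comm X Y)
  (H : forall j, (j < n)%N -> (z ^+ j *: X + Y) ^+ n = K) {l} :
  (0 < l < n)%N -> n%:R *: ((Y ^+ (n - l) * X ^+ l) *+ 'C(n, l)) = 0.
Proof.
move=> Hl.
pose T (i : nat) := (Y ^+ (n - i) * X ^+ i) *+ 'C(n, i).
have S0 : \sum_(j < n) (z ^+ (n - l)) ^+ j *: ((z ^+ j *: X + Y) ^+ n - K) = 0.
  by apply: big1 => j _; rewrite H // subrr scaler0.
have E (j : 'I_n) : (z ^+ (n - l)) ^+ j *: ((z ^+ j *: X + Y) ^+ n - K) =
   \sum_(i < n.+1) (z ^+ (n - l + i)) ^+ j *: T i - (z ^+ (n - l)) ^+ j *: K.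
  have cYZ : GRing.comm Y (z ^+ j *: X).
    by rewrite /GRing.comm -scalerAr -scalerAl cXY.
  rewrite [z ^+ j *: X + Y]addrC (exprDn_comm _ cYZ) scalerBr scaler_sumr.
  congr (_ - _); apply: eq_bigr => i _.
  rewrite exprZn -scalerAr scalerMnr scalerA /T; congr (_ *: _).
  rewrite -!exprM -exprD; congr (_ ^+ _); lia.
rewrite -S0 (eq_bigr _ (fun j _ => E j)) sumrB exchange_big /=.
under eq_bigr do rewrite -scaler_suml geom.
rewrite -scaler_suml geom.
have -> : (n %| n - l)%N = false.
  by have := @dvd_aux l 0 Hl (leq0n n); rewrite addn0 => ->; lia.
rewrite scale0r subr0.
have Hl' : (l < n.+1)%N by case/andP: Hl => _ /ltnW.
rewrite (bigD1 (Ordinal Hl')) //= dvd_aux // ?eqxx // big1 ?addr0 //.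
move=> i /eqP Hi; rewrite dvd_aux //; last by rewrite -ltnS.
case: eqP => [Hil|]; last by rewrite scale0r.
by exfalso; apply: Hi; apply: val_inj.
Qed.

Lemma n_neq0 : n%:R != 0 :> k.
Proof. exact: prim_root_natf_neq0 prim. Qed.

Lemma n_gt0 : (0 < n)%N.
Proof. exact: prim_order_gt0 prim. Qed.

Lemma extract1 {X Y K : A} (cXY : GRing.comm X Y)
  (H : forall j, (j < n)%N -> (z ^+ j *: X + Y) ^+ n = K) :
  (1 < n)%N -> Y ^+ (n.-1) * X = 0 /\ Y * X ^+ n.-1 = 0.
Proof.
move=> n1.
have nn : (n%:R * n%:R : k) != 0 by rewrite mulf_neq0 // n_neq0.
split.
  have h01 : (0 < 1 < n)%N by rewrite n1.
  have := extract cXY H (l:=1) h01; rewrite bin1 expr1 subn1 -scaler_nat scalerA.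
  by move=> /eqP; rewrite scaler_eq0 (negbTE nn) /= => /eqP.
have hl : (0 < n.-1 < n)%N by have := n_gt0; lia.
have := extract cXY H (l:=n.-1) hl.
have -> : (n - n.-1 = 1)%N by lia.
have -> : 'C(n, n.-1) = n.
  by rewrite -subn1 bin_sub ?bin1 //; lia.
rewrite expr1 -scaler_nat scalerA => /eqP; rewrite scaler_eq0 (negbTE nn) /=.
by move/eqP.
Qed.

Lemma descent {X Y : A} (cXY : GRing.comm X Y) (sXY : X + Y = 1) {a b} :
  Y ^+ a.+1 * X = 0 -> Y * X ^+ b.+1 = 0 -> Y * X = 0.
Proof.
elim: a => [|a IH] Ha Hb; first by rewrite expr1 in Ha.
apply: IH => //.
have step c : Y ^+ a.+1 * X ^+ c.+1 = Y ^+ a.+1 * X.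
  elim: c => [|c IHc]; first by rewrite expr1.
  have h0 : Y ^+ a.+1 * X ^+ c.+1 * Y = 0.
    rewrite -mulrA. idtac. rewrite -(commrX c.+1 (commr_sym cXY)). rewrite (mulrA (Y ^+ a.+1) Y) -exprSr.
    by rewrite [X ^+ c.+1]exprS mulrA Ha mul0r.
  rewrite -{}IHc.
  by rewrite -[RHS]mulr1 -sXY mulrDr h0 addr0 -mulrA -exprSr.
rewrite -(step b) exprSr -mulrA Hb mulr0 //.
Qed.

Lemma idem (X : A) (n1 : (1 < n)%N)
  (H : forall j, (j < n)%N -> (z ^+ j *: X + (1 - X)) ^+ n = 1) : X * X = X.
Proof.
have cXY : GRing.comm X (1 - X).
  by rewrite /GRing.comm mulrBr mulrBl mulr1 mul1r.
have [h1 h2] := extract1 cXY H n1.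
have [n'' En] : exists n'', n = n''.+2 by exists (n - 2)%N; lia.
rewrite En /= in h1 h2.
have : (1 - X) * X = 0 by apply: (descent cXY _ h1 h2); rewrite addrC subrK.
by rewrite mulrBl mul1r => /eqP; rewrite subr_eq0 => /eqP.
Qed.

End Core.
Section Main.
Variables (k : fieldType) (A : algType k) (d n : nat) (z : k).
Hypothesis prim : n.-primitive_root z.
Hypothesis hn : (2 < n)%N.
Variable phi : {ffun 'I_d -> k} -> A.
Hypothesis hadd : forall a b, phi (a + b) = phi a + phi b.
Hypothesis hsc : forall (c : k) (a : {ffun 'I_d -> k}), phi [ffun i => c * a i] = c *: phi a.
Hypothesis h1 : phi 1 = 1.
Hypothesis hpow : forall a : {ffun 'I_d -> k}, a ^+ n = 1 -> (phi a) ^+ n = 1.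

Let e (i : 'I_d) : {ffun 'I_d -> k} := [ffun l => (l == i)%:R].
Let sc (c : k) (a : {ffun 'I_d -> k}) : {ffun 'I_d -> k} := [ffun l => c * a l].
Let P i := phi (e i).

Lemma phi0 : phi 0 = 0.
Proof. by apply/(addrI (phi 0)); rewrite -hadd !addr0. Qed.

Lemma powffun (f : {ffun 'I_d -> k}) l m : (f ^+ m) l = f l ^+ m.
Proof. elim: m => [|m IH]; first by rewrite !expr0 ffunE.
by rewrite !exprS ffunE IH. Qed.

Lemma zroot j : (1 + (z ^+ j - 1)) ^+ n = 1.
Proof. by rewrite addrC subrK exprAC (prim_expr_order prim) expr1n. Qed.

Lemma n1 : (1 < n)%N. Proof. lia. Qed.

Lemma single i j : (z ^+ j *: P i + (1 - P i)) ^+ n = 1.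
Proof.
have -> : z ^+ j *: P i + (1 - P i) = phi (1 + sc (z ^+ j - 1) (e i)).
  by rewrite hadd h1 hsc scalerBl scale1r addrCA.
apply: hpow; apply/ffunP => l; rewrite powffun !ffunE.
case: (l == i); rewrite ?mulr1 ?mulr0 ?addr0 ?expr1n //.
exact: zroot.
Qed.

Lemma Pidem i : P i * P i = P i.
Proof. by apply: (@idem k A n z prim (P i) n1) => j _; apply: single. Qed.

Lemma double i i' c c' : i != i' -> (1 + c) ^+ n = 1 -> (1 + c') ^+ n = 1 ->
  (1 + c *: P i + c' *: P i') ^+ n = 1.
Proof.
move=> ne hc hc'.
have -> : 1 + c *: P i + c' *: P i' = phi (1 + sc c (e i) + sc c' (e i')).
  by rewrite !hadd h1 !hsc.
apply: hpow; apply/ffunP => l; rewrite powffun !ffunE.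
case: (eqVneq l i) => [->|_]; first by rewrite (negbTE ne) !mulr1 mulr0 addr0.
by case: (l == i'); rewrite ?mulr1 ?mulr0 ?addr0 ?expr1n.
Qed.

Lemma anti {i i'} : i != i' -> P i * P i' + P i' * P i = 0.
Proof.
move=> ne.
have H : (P i + P i') * (P i + P i') = P i + P i'.
  apply: (@idem k A n z prim (P i + P i') n1) => j _.
  have := @double i i' (z ^+ j - 1) (z ^+ j - 1) ne (zroot j) (zroot j).
  congr (_ ^+ _ = _).
  rewrite scalerDr !scalerBl !scale1r.
  by rewrite -[LHS]addrA (addrACA (z ^+ j *: P i)) opprD [LHS]addrCA.
move: H; rewrite mulrDl !mulrDr !Pidem => H.
apply/(addrI (P i + P i')); rewrite addr0 -[in RHS]H addrACA.
by rewrite [P i' + _]addrC.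
Qed.

Lemma commP {i i'} : i != i' -> P i * P i' = P i' * P i.
Proof.
move=> ne; have H := anti ne.
have H1 : P i * P i' = - (P i' * P i) by apply/eqP; rewrite -subr_eq0 opprK H.
have H2 : P i * P i' * P i = - (P i' * P i) by rewrite H1 mulNr -mulrA Pidem.
have H1' : P i' * P i = - (P i * P i') by rewrite H1 opprK.
have H3 : P i * P i' * P i = - (P i * P i') by rewrite -mulrA H1' mulrN mulrA Pidem.
by rewrite -[LHS]opprK -H3 H2 opprK.
Qed.

Lemma expr_idem (E : A) m : E * E = E -> E ^+ m.+1 = E.
Proof. move=> h; elim: m => [|m IH]; first by rewrite expr1.
by rewrite exprS IH h. Qed.

Lemma orth {i i'} : i != i' -> P i * P i' = 0.
Proof.
move=> ne; set E := P i * P i'.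
have c := commP ne.
have EE : E * E = E.
  by rewrite /E -mulrA [P i' * _]mulrA -c -!mulrA Pidem mulrA Pidem.
have EPi : E * P i = E by rewrite /E -mulrA -c mulrA Pidem.
have EPi' : E * P i' = E by rewrite /E -mulrA Pidem.
have z1 : z - 1 != 0.
  rewrite subr_eq0; apply/negP => /eqP hz.
  have := prim_order_dvd prim 1; rewrite expr1 hz eqxx dvdn1 => /eqP hn1; lia.
pose S t := 1 + (z ^+ t - 1) *: P i + (z - 1) *: P i'.
have ES t : E * S t = z ^+ t *: E + (z - 1) *: E.
  rewrite /S !mulrDr mulr1 -!scalerAr EPi EPi' scalerBl scale1r.
  by rewrite [E + _]addrCA subrr addr0.
have cES t : GRing.comm E (S t).
  rewrite /GRing.comm /S !mulrDr !mulrDl mulr1 mul1r -!scalerAr -!scalerAl.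
  rewrite EPi EPi'.
  have -> : P i * E = E by rewrite /E mulrA Pidem.
  by have -> : P i' * E = E by rewrite /E c mulrA Pidem.
have H : forall t, (t < n)%N -> (z ^+ t *: E + (z - 1) *: E) ^+ n = E.
  move=> t _; rewrite -ES exprMn_comm // double //; last exact: zroot 1.
    by rewrite mulr1; case: n hn => // n' _; rewrite expr_idem.
  exact: zroot.
have cXY : GRing.comm E ((z - 1) *: E).
  by rewrite /GRing.comm -scalerAr -scalerAl.
have [_ h2] := @extract1 k A n z prim _ _ _ cXY H n1.
have e2 : n.-1 = (n - 2).+1 by lia.
move: h2; rewrite e2 -scalerAl expr_idem // => /eqP; rewrite scaler_eq0 (negbTE z1) /=.
by rewrite EE => /eqP.
Qed.

Lemma decomp (a : {ffun 'I_d -> k}) : phi a = \sum_i a i *: P i.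
Proof.
have Ea : a = \sum_i sc (a i) (e i).
  apply/ffunP => l; rewrite sum_ffunE (bigD1 l) //= big1 ?addr0.
    by rewrite !ffunE eqxx mulr1.
  by move=> i /negbTE ne; rewrite !ffunE eq_sym ne mulr0.
rewrite [in LHS]Ea (big_morph phi hadd phi0); apply: eq_bigr => i _; by rewrite /sc hsc.
Qed.

Lemma mult a b : phi (a * b) = phi a * phi b.
Proof.
rewrite !decomp mulr_suml; apply: eq_bigr => i _.
rewrite mulr_sumr (bigD1 i) //= big1 ?addr0.
  by rewrite ffunE -scalerAl -scalerAr scalerA Pidem.
by move=> j ne; rewrite -scalerAl -scalerAr orth ?scaler0 // eq_sym.
Qed.
End Main.


Theorem theoremA (k : fieldType) (d m n : nat)
  (phi : {ffun 'I_d -> k} -> 'M[k]_m)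
  (hd : (0 < d)%N) (hn : (2 < n)%N)
  (hroot : exists z : k, n.-primitive_root z)
  (hlin : klinear phi)
  (h1 : phi 1 = 1%:M)
  (hpow : forall a : {ffun 'I_d -> k}, a ^+ n = 1 -> (phi a) ^+ n = 1%:M) :
  phi 1 = 1%:M /\ (forall a b, phi (a * b) = phi a *m phi b).
Proof.
split; first exact: h1.
case: hlin => hadd hsc.
case: m phi h1 hpow hadd hsc => [|m] phi h1 hpow hadd hsc a b.
  by apply/matrixP => [[i Hi]].
case: hroot => z prim.
exact: (@mult k _ d n z prim hn phi hadd hsc h1 hpow a b).
Qed.
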